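(* Let $G$ be a finite group such that (a) the Gruenberg--Kegel graph of $G$ is connected, and (b) for every Sylow subgroup $P$ of $G$, the centre $Z(P)$ is non-cyclic. Then the induced subgraph of $(\mathrm{Com}-\mathrm{Pow})(G)$ on $G\setminus\{1\}$ either has an isolated vertex or is connected.
   Context: $(\mathrm{Com}-\mathrm{Pow})(G)$ is the graph on vertex set $G$ in which distinct $x,y$ are adjacent iff $xy=yx$ and neither of $x,y$ is a power of the other. The Gruenberg--Kegel graph of $G$ has vertex set the primes dividing $|G|$, distinct primes $p,q$ being adjacent iff $G$ has an element of order $pq$. *)

(* Defs.v *)
From mathcomp Require Import all_boot all_fingroup all_solvable.
Set Implicit Arguments. Unset Strict Implicit. Unset Printing Implicit Defensive.
Local Open Scope group_scope.

Definition connected_on (T : eqType) (V : pred T) (e : rel T) : Prop :=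
  forall x y, V x -> V y ->
    exists s : seq T, [/\ path e x s, last x s = y & all V s].

Definition GK_adj (gT : finGroupType) (G : {set gT}) : rel nat :=
  fun p q => (p != q) && [exists x in G, #[x] == (p * q)%N].

Definition GK_connected (gT : finGroupType) (G : {set gT}) : Prop :=
  connected_on (fun p => p \in primes #|G|) (GK_adj G).

Definition ComPow_adj (gT : finGroupType) : rel gT :=
  fun x y => [&& x != y, x * y == y * x, x \notin <[y]> & y \notin <[x]>].

(* Main.v *)
Require Import Defs.
From mathcomp Require Import all_boot all_fingroup all_solvable.
Set Implicit Arguments. Unset Strict Implicit. Unset Printing Implicit Defensive.
Local Open Scope group_scope.


Section S.
Variable gT : finGroupType.
Implicit Types x y z u t w g : gT.

Lemma ComPow_sym x y : ComPow_adj x y = ComPow_adj y x.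
Proof.
rewrite /ComPow_adj eq_sym (eq_sym (x * y)).
by case: (x \in <[y]>); case: (y \in <[x]>); rewrite ?andbF ?andbT.
Qed.

Definition Ep (G : {set gT}) : rel gT :=
  fun x y => [&& x \in G^#, y \in G^# & ComPow_adj x y].

Lemma Ep_sym G : symmetric (Ep G).
Proof. by move=> x y; rewrite /Ep ComPow_sym andbA andbA (andbC (x \in _)). Qed.

Lemma conn_sym G x y : connect (Ep G) x y = connect (Ep G) y x.
Proof. exact: (sym_connect_sym (Ep_sym G)). Qed.

Lemma ComPow_conj x y g : ComPow_adj (x ^ g) (y ^ g) = ComPow_adj x y.
Proof.
rewrite /ComPow_adj (inj_eq (conjg_inj g)) -!conjMg (inj_eq (conjg_inj g)).
by rewrite !cycleJ !memJ_conjg.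
Qed.

Lemma Ep_conj (G : {group gT}) x y g : g \in G -> Ep G (x ^ g) (y ^ g) = Ep G x y.
Proof.
by move=> Gg; rewrite /Ep ComPow_conj !in_setD1 !conjg_eq1 !groupJr.
Qed.

Lemma conn_conj (G : {group gT}) x y g : g \in G ->
  connect (Ep G) x y -> connect (Ep G) (x ^ g) (y ^ g).
Proof.
move=> Gg /connectP[s ps ->]; elim: s x ps => [|z s IH] x /=; first by move=> _; exact: connect0.
case/andP=> exz ps; apply: (connect_trans (connect1 _) (IH z ps)).
by rewrite Ep_conj.
Qed.

Lemma notin_cycle u t : ~~ (#[t] %| #[u])%N -> t \notin <[u]>.
Proof. by apply: contra => /order_dvdG. Qed.

Lemma adj_coprime u t p q : commute u t -> #[u] = p -> #[t] = q ->
  prime p -> prime q -> p != q -> ComPow_adj u t.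
Proof.
move=> cut ou ot pp pq npq; rewrite /ComPow_adj.
have -> : u != t by apply: contraNneq npq => eut; rewrite -ou -ot eut.
rewrite cut eqxx /= !notin_cycle // ?ou ?ot dvdn_prime2 // 1?eq_sym //.
Qed.


Lemma exist_Ohm (P : {group gT}) w : ~~ cyclic 'Z(P) ->
  exists2 z, z \in 'Ohm_1('Z(P)) & z \notin <[w]>.
Proof.
move=> ncyc; case: (boolP ('Ohm_1('Z(P)) \subset <[w]>)) => [sub | /subsetPn[z Hz nz]]; last by exists z.
case/negP: ncyc; rewrite abelian_rank1_cyclic ?center_abelian // -rank_Ohm1.
by apply: leq_trans (rankS sub) _; rewrite rank_cycle leq_b1.
Qed.

Lemma Ohm_order (P : {group gT}) (p : nat) z : p.-group P -> prime p ->
  z \in 'Ohm_1('Z(P)) -> z != 1 -> #[z] = p.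
Proof.
move=> pP pp Hz nz.
have pZ : p.-group 'Z(P) by apply: pgroupS pP; apply: center_sub.
have aO : abelian 'Ohm_1('Z(P)) by apply: abelianS (Ohm_sub 1 _) (center_abelian P).
move: Hz; rewrite (OhmEabelian pZ aO) !inE => /andP[_ ]; rewrite expn1 -order_dvdn => dz.
case/primeP: pp => _ /(_ _ dz) /orP[|/eqP//]; by rewrite order_eq1 (negbTE nz).
Qed.

Lemma adj_center (P : {group gT}) (p : nat) w z : p.-group P -> prime p -> w \in P -> w != 1 ->
  z \in 'Ohm_1('Z(P)) -> z \notin <[w]> -> ComPow_adj w z.
Proof.
move=> pP pp Pw nw Hz nz.
have nz1 : z != 1 by apply: contraNneq nz => ->; exact: group1.
have oz := Ohm_order pP pp Hz nz1.
have /setIP[_ /centP cz] : z \in 'Z(P) by apply: (subsetP (Ohm_sub 1 _)).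
rewrite /ComPow_adj nz andbT.
have -> : w != z by apply: contraNneq nz => <-; exact: cycle_id.
rewrite (cz w Pw) eqxx /=.
apply/negP => wz; case/negP: nz.
have dw : (#[w] %| p)%N by rewrite -oz; apply: order_dvdG.
have ow : #[w] = p.
  by case/primeP: pp => _ /(_ _ dw) /orP[|/eqP//]; rewrite order_eq1 (negbTE nw).
have -> : <[w]> = <[z]>.
  apply/eqP; rewrite eqEcard cycle_subG wz /=.
  by rewrite -[#|<[w]>|]/#[w] -[#|<[z]>|]/#[z] ow oz.
exact: cycle_id.
Qed.

Lemma Ep_center (G P : {group gT}) (p : nat) w z : P \subset G -> p.-group P -> prime p ->
  w \in P^# -> z \in 'Ohm_1('Z(P)) -> z \notin <[w]> -> Ep G w z.
Proof.
move=> sPG pP pp /setD1P[nw Pw] Hz nz.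
have nz1 : z != 1 by apply: contraNneq nz => ->; exact: group1.
have Pz : z \in P by apply: (subsetP (center_sub P)); apply: (subsetP (Ohm_sub 1 _)).
rewrite /Ep !in_setD1 nw nz1 !(subsetP sPG) //=.
exact: adj_center pP pp Pw nw Hz nz.
Qed.

Lemma PC (G P : {group gT}) (p : nat) : P \subset G -> p.-group P -> prime p -> ~~ cyclic 'Z(P) ->
  forall v w, v \in P^# -> w \in P^# -> connect (Ep G) v w.
Proof.
move=> sPG pP pp ncyc v w Hv Hw.
have [z1 H1 n1] := exist_Ohm w ncyc.
have [z2 H2 n2] := exist_Ohm v ncyc.
have inP z : z \in 'Ohm_1('Z(P)) -> z != 1 -> z \in P^#.
  move=> Hz nz; rewrite in_setD1 nz /=.
  by apply: (subsetP (center_sub P)); apply: (subsetP (Ohm_sub 1 _)).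
have nz1 : z1 != 1 by apply: contraNneq n1 => ->; exact: group1.
have nz2 : z2 != 1 by apply: contraNneq n2 => ->; exact: group1.
apply: (connect_trans (connect1 (Ep_center sPG pP pp Hv H2 n2))).
rewrite conn_sym; apply: (connect_trans (connect1 (Ep_center sPG pP pp Hw H1 n1))).
case: (boolP (z2 \in <[z1]>)) => [i21 | n21].
  have [z3 H3 n3] := exist_Ohm z1 ncyc.
  apply: (connect_trans (connect1 (Ep_center sPG pP pp (inP _ H1 nz1) H3 n3))).
  rewrite conn_sym; apply: connect1; apply: (Ep_center sPG pP pp (inP _ H2 nz2) H3).
  by apply: contra n3; apply/subsetP; rewrite cycle_subG.
exact: connect1 (Ep_center sPG pP pp (inP _ H1 nz1) H2 n21).
Qed.

End S.

Lemma path_all (gT : finGroupType) (G : {set gT}) x s :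
  path (Ep G) x s -> all (fun v => v \in G^#) s.
Proof.
elim: s x => [|z s IH] x //= /andP[/and3P[_ Hz _] ps]; by rewrite Hz (IH z ps).
Qed.

Unset Implicit Arguments.

Theorem mainTheorem20 (gT : finGroupType) (G : {group gT}) :
  GK_connected G ->
  (forall p, p \in primes #|G| ->
     forall P : {group gT}, P \in 'Syl_p(G) -> ~~ cyclic 'Z(P)) ->
  (exists2 x, x \in G^# & forall y, y \in G^# -> ~~ ComPow_adj x y)
  \/ connected_on (fun x => x \in G^#) (@ComPow_adj gT).
Proof.
move=> GKc Hsyl.
case: (boolP [exists x in G^#, [forall y in G^#, ~~ ComPow_adj x y]]) =>
  [/exists_inP[x Hx /forall_inP H] | noiso]; first by left; exists x.
right.
have nbr : forall x, x \in G^# -> exists2 y, y \in G^# & ComPow_adj x y.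
  move=> x Hx; move: noiso; rewrite negb_exists_in => /forall_inP/(_ x Hx).
  by rewrite negb_forall_in => /exists_inP[y Hy]; rewrite negbK; exists y.
suff main : forall x y, x \in G^# -> y \in G^# -> connect (Ep G) x y.
  move=> x y Hx Hy; have /connectP[s ps ->] := main x y Hx Hy.
  exists s; split => //; last exact: path_all ps.
  by apply: sub_path ps => a b /and3P[].
move=> x0 y0 Hx0 Hy0.
have G1 : 1 < #|G|.
  rewrite cardG_gt1; apply/trivgPn; exists x0; by case/setD1P: Hx0.
pose p0 := pdiv #|G|.
have pp0 : prime p0 by apply: pdiv_prime.
have [a0 Ga0 oa0] := Cauchy pp0 (pdiv_dvd _).
have Ha0 : a0 \in G^#.
  rewrite in_setD1 Ga0 andbT -order_eq1 oa0; apply: contraTneq pp0 => ->; done.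
pose good (p : nat) := exists2 P : {group gT}, p.-Sylow(G) P &
   forall v, v \in P^# -> connect (Ep G) a0 v.
have syl_nc : forall (p : nat) (P : {group gT}), p \in primes #|G| -> p.-Sylow(G) P -> ~~ cyclic 'Z(P).
  by move=> p P Hp SP; apply: (Hsyl p Hp); rewrite inE.
have lift : forall (p : nat) t, p \in primes #|G| -> t \in G^# -> p.-elt t ->
    connect (Ep G) a0 t -> good p.
  move=> p t Hp Ht pt ct.
  have pp : prime p by move: Hp; rewrite mem_primes => /andP[].
  have Gt : t \in G by case/setD1P: Ht.
  have sG : <[t]> \subset G by rewrite cycle_subG.
  have [P SP sP] := Sylow_superset sG pt.
  exists P => // v Hv; apply: connect_trans ct _.
  apply: (PC (pHall_sub SP) (pHall_pgroup SP) pp (syl_nc p P Hp SP)) => //.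
  rewrite in_setD1; case/setD1P: Ht => -> _; by rewrite (subsetP sP) ?cycle_id.
have p0G : p0 \in primes #|G| by rewrite mem_primes pp0 cardG_gt0 pdiv_dvd.
have good0 : good p0.
  apply: (lift p0 a0 p0G Ha0 _ (connect0 _ _)).
  by rewrite /p_elt oa0 pnat_id.
have ne1 : forall (z : gT) (r : nat), #[z] = r -> prime r -> z != 1.
  by move=> z r oz pr; rewrite -order_gt1 oz prime_gt1.
have step : forall p q, p \in primes #|G| -> q \in primes #|G| -> GK_adj G p q -> good p -> good q.
  move=> p q Hp Hq /andP[npq /exists_inP[g Gg /eqP og]] [P SP gP].
  have pp : prime p by move: Hp; rewrite mem_primes => /andP[].
  have pq : prime q by move: Hq; rewrite mem_primes => /andP[].
  pose u := g ^+ q; pose t := g ^+ p.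
  have ou : #[u] = p by rewrite orderXdiv og ?dvdn_mull // mulnK // prime_gt0.
  have ot : #[t] = q by rewrite orderXdiv og ?dvdn_mulr // mulKn // prime_gt0.
  have Gu : u \in G by rewrite groupX.
  have Gt : t \in G by rewrite groupX.
  have sG : <[u]> \subset G by rewrite cycle_subG.
  have pu : p.-elt u by rewrite /p_elt ou pnat_id.
  have [h Gh sP] := Sylow_Jsub SP sG pu.
  have Pu : u ^ h \in P by rewrite (subsetP sP) // memJ_conjg cycle_id.
  have Hu : u ^ h \in G^# by rewrite in_setD1 groupJ // conjg_eq1 (ne1 u p).
  have Htu : t ^ h \in G^# by rewrite in_setD1 groupJ // conjg_eq1 (ne1 t q).
  have cu : connect (Ep G) a0 (u ^ h).
    by apply: gP; rewrite in_setD1 Pu andbT conjg_eq1 (ne1 u p).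
  have e : Ep G (u ^ h) (t ^ h).
    rewrite /Ep Hu Htu ComPow_conj /=; apply: (adj_coprime _ ou ot pp pq npq).
    exact: commuteX2.
  apply: (lift q (t ^ h) Hq Htu _ (connect_trans cu (connect1 e))).
  by rewrite p_eltJ /p_elt ot pnat_id.
have pathgood : forall s p, p \in primes #|G| -> good p -> path (GK_adj G) p s ->
    all (fun r => r \in primes #|G|) s -> good (last p s).
  elim=> [|r s IH] p Hp gp //= /andP[adj ps] /andP[Hr als].
  exact: IH r Hr (step p r Hp Hr adj gp) ps als.
have allgood : forall q, q \in primes #|G| -> good q.
  move=> q Hq; have [s [ps ls als]] := GKc p0 q p0G Hq.
  rewrite -ls; exact: pathgood.
pose N := [set g in G | connect (Ep G) a0 (a0 ^ g)].
have gN : group_set N.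
  apply/group_setP; split; first by rewrite inE group1 conjg1 connect0.
  move=> g h; rewrite !inE => /andP[Gg cg] /andP[Gh ch]; rewrite groupM //= conjgM.
  exact: connect_trans ch (conn_conj Gh cg).
pose NG := Group gN.
have sNG : NG \subset G by apply/subsetP => g; rewrite inE => /andP[].
have sPN : forall p, p \in primes #|G| -> exists2 P : {group gT}, p.-Sylow(G) P & P \subset NG.
  move=> p Hp; have [P SP gP] := allgood p Hp; exists P => //.
  apply/subsetP => g Pg; have Gg : g \in G by rewrite (subsetP (pHall_sub SP)).
  rewrite inE Gg /=.
  case: (eqVneq g 1) => [-> | ng]; first by rewrite conjg1 connect0.
  have cg := gP g (etrans (in_setD1 _ _ _) (introT andP (conj ng Pg))).
  have := conn_conj Gg cg; have -> : g ^ g = g by rewrite conjgE mulKg.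
  by move=> c2; apply: connect_trans cg _; rewrite conn_sym.
have NGeq : NG :=: G.
  apply/eqP; rewrite eqEcard sNG /=; apply: dvdn_leq; first exact: (cardG_gt0 NG).
  apply/dvdn_partP; first exact: cardG_gt0.
  move=> p Hp; have [P SP sP] := sPN p Hp; rewrite -(card_Hall SP).
  exact: (cardSg sP).
have conjN : forall h, h \in G -> connect (Ep G) a0 (a0 ^ h).
  move=> h Gh; have : h \in NG by rewrite NGeq.
  by rewrite inE => /andP[].
have allpp : forall (w : gT) (p : nat), w \in G^# -> p.-elt w -> connect (Ep G) a0 w.
  move=> w p Hw pw; case/setD1P: (Hw) => nw Gw.
  have ntw : <[w]> :!=: 1 by rewrite cycle_eq1.
  have [pp dp _] := pgroup_pdiv pw ntw.
  have Hp : p \in primes #|G| by rewrite mem_primes pp cardG_gt0 (dvdn_trans dp (order_dvdG Gw)).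
  have [P SP gP] := allgood p Hp.
  have sG : <[w]> \subset G by rewrite cycle_subG.
  have [h Gh sP] := Sylow_Jsub SP sG pw.
  have Pw : w ^ h \in P^# by rewrite in_setD1 conjg_eq1 nw (subsetP sP) // memJ_conjg cycle_id.
  have c1 := conn_conj (groupVr Gh) (gP _ Pw); rewrite conjgK in c1.
  exact: connect_trans (conjN _ (groupVr Gh)) c1.
have allx : forall x, x \in G^# -> connect (Ep G) a0 x.
  move=> x Hx; case: (boolP ((pdiv #[x]).-elt x)) => [px | npx]; first exact: allpp px.
  have [y Hy adj] := nbr x Hx.
  have Gy : y \in G by case/setD1P: Hy.
  have nx : x != 1 by case/setD1P: Hx.
  have [r nr] : exists r : 'I_#[y].+1, y.`_r \notin <[x]>.
    case: (boolP [exists r : 'I_#[y].+1, y.`_r \notin <[x]>]) => [/existsP // |].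
    rewrite negb_exists => /forallP allr.
    exfalso; move: adj; rewrite /ComPow_adj => /and4P[_ _ _ /negP]; apply.
    rewrite -(prod_constt y) big_mkord; apply: group_prod => i _.
    by move: (allr i); rewrite negbK.
  pose w := y.`_r.
  have wy : w \in <[y]> := cycle_constt _ _.
  have Gw : w \in G by move: wy; apply: subsetP; rewrite cycle_subG.
  have nw : w != 1 by apply: contraNneq nr => wr; rewrite -/w wr; exact: group1.
  have cxw : commute x w.
    move: adj; rewrite /ComPow_adj => /and4P[_ /eqP cxy _ _].
    by case/cycleP: wy => i wi; rewrite wi; apply: commuteX.
  have xnw : x \notin <[w]>.
    apply: contra npx => xw.
    have rx : r.-elt x := mem_p_elt (p_elt_constt r y) xw.
    have ntx : <[x]> :!=: 1 by rewrite cycle_eq1.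
    have [pr _ [m om]] := pgroup_pdiv rx ntx.
    have -> : pdiv #[x] = r by rewrite -[#[x]]/(#|<[x]>|) om pdiv_pfactor.
    exact: rx.
  have Hw : w \in G^# by rewrite in_setD1 nw Gw.
  have e : Ep G x w.
    rewrite /Ep Hx Hw /ComPow_adj cxw eqxx xnw nr /= andbT.
    by apply: contraNneq xnw => ->; exact: cycle_id.
  apply: connect_trans (allpp w r Hw (p_elt_constt _ _)) _.
  by rewrite conn_sym; exact: connect1.
apply: connect_trans (allx y0 Hy0); rewrite conn_sym; exact: allx.
Qed.
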